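(* For the operad $\operatorname{Arb}^{!}$, one has $\operatorname{Arb}^{!}(1)\cong\operatorname{Ass}(1)$ and, for every $n\ge2$, $\operatorname{Arb}^{!}(n)\cong\operatorname{Lie}(n)\oplus\operatorname{Ass}(n)$ as $\mathfrak{S}_n$-modules, where $\operatorname{Lie}(n)$ and $\operatorname{Ass}(n)$ are the arity-$n$ components of the classical operads $\operatorname{Lie}$ and $\operatorname{Ass}$.
   Context: $\operatorname{Arb}^{!}$ is the binary quadratic (linear) operad whose algebras are vector spaces $A$ with an antisymmetric bracket $[\,,\,]$ and a (non-commutative) product $*$ satisfying, for all $a,b,c\in A$: $[a,[b,c]]+[b,[c,a]]+[c,[a,b]]=0$; $[a,b]*c=0$; $a*(b*c)=0$; $[a*b,c]=0$; $a*[b,c]=(a*b)*c-(a*c)*b$. (It is the Koszul dual of the operad of shrubs, but this definition by generators and relations suffices.) *)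

(* Defs.v *)
From HB Require Import structures.
From mathcomp Require Import all_boot all_order fingroup perm all_algebra.
Set Implicit Arguments. Unset Strict Implicit. Unset Printing Implicit Defensive.
Import GRing.Theory.
Local Open Scope ring_scope.

(* Binary trees with two kinds of internal nodes: Br = bracket [ , ],
   Pr = product * ; leaves are labelled by natural numbers. *)
Inductive tr : Type := Lf of nat | Br of tr & tr | Pr of tr & tr.

Definition tr_eq_dec : forall x y : tr, {x = y} + {x <> y}.
Proof. decide equality; decide equality. Defined.
HB.instance Definition _ := hasDecEq.Build tr (compareP tr_eq_dec).

Fixpoint leaves (t : tr) : seq nat :=
  match t with Lf x => [:: x] | Br l r => leaves l ++ leaves r
             | Pr l r => leaves l ++ leaves r end.

Fixpoint gen (n f k : nat) : seq tr :=
  match f with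
  | 0 => [::]
  | f'.+1 =>
    if k == 1%N then map Lf (iota 0 n)
    else flatten [seq flatten [seq flatten [seq [:: Br l r; Pr l r]
                                           | r <- gen n f' (k - i)]
                              | l <- gen n f' i]
                 | i <- iota 1 k.-1]
  end.

(* basis of the arity-n component of the free operad on [,] and * :
   multilinear trees whose leaves are exactly 0..n-1, each once *)
Definition trees (n : nat) : seq tr :=
  undup [seq t <- gen n n n | perm_eq (leaves t) (iota 0 n)].

(* basis of Ass(n): words using each of 0..n-1 exactly once *)
Definition words (n : nat) : seq (seq nat) := permutations (iota 0 n).

Definition actn (n : nat) (s : 'S_n) (x : nat) : nat :=
  odflt x (omap (fun i : 'I_n => val (s i)) (insub x)).

Fixpoint relabel (f : nat -> nat) (t : tr) : tr :=
  match t with Lf x => Lf (f x) | Br l r => Br (relabel f l) (relabel f r)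
             | Pr l r => Pr (relabel f l) (relabel f r) end.

Section Spaces.
Variable K : fieldType.

Definition tvec (n : nat) (t : tr) : 'rV[K]_(size (trees n)) :=
  \row_i ((nth t (trees n) i == t)%:R).

Definition fvec (n : nat) (s : seq (K * tr)) : 'rV[K]_(size (trees n)) :=
  \sum_(p <- s) p.1 *: tvec n p.2.

(* relation instances whose "leading" monomial is the tree itself *)
Definition rel_root (t : tr) : seq (seq (K * tr)) :=
  (if t is Br a b then [:: [:: (1, Br a b); (1, Br b a)]] else [::])
  ++ (if t is Br a (Br b c) then
        [:: [:: (1, t); (1, Br b (Br c a)); (1, Br c (Br a b))]] else [::])
  ++ (if t is Pr (Br a b) c then [:: [:: (1, t)]] else [::])
  ++ (if t is Pr a (Pr b c) then [:: [:: (1, t)]] else [::])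
  ++ (if t is Br (Pr a b) c then [:: [:: (1, t)]] else [::])
  ++ (if t is Pr a (Br b c) then
        [:: [:: (1, t); (-1, Pr (Pr a b) c); (1, Pr (Pr a c) b)]] else [::]).

(* relation instances plugged at every position of t (operadic ideal) *)
Fixpoint all_rels (t : tr) : seq (seq (K * tr)) :=
  rel_root t ++
  match t with
  | Lf _ => [::]
  | Br l r => [seq [seq (p.1, Br p.2 r) | p <- c] | c <- all_rels l]
           ++ [seq [seq (p.1, Br l p.2) | p <- c] | c <- all_rels r]
  | Pr l r => [seq [seq (p.1, Pr p.2 r) | p <- c] | c <- all_rels l]
           ++ [seq [seq (p.1, Pr l p.2) | p <- c] | c <- all_rels r]
  end.

Definition Rels (n : nat) : seq (seq (K * tr)) :=
  flatten [seq all_rels t | t <- trees n].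

(* rows span the arity-n component of the ideal; Arb^!(n) = K^(trees n)/rowspace *)
Definition ArbRel (n : nat) : 'M[K]_(size (Rels n), size (trees n)) :=
  \matrix_(i < size (Rels n)) fvec n (nth [::] (Rels n) i).

(* S_n acting (on row vectors, by right multiplication) on the free operad *)
Definition treeAct (n : nat) (s : 'S_n) : 'M[K]_(size (trees n)) :=
  \matrix_(i, j) ((nth (Lf 0) (trees n) j
                    == relabel (actn s) (nth (Lf 0) (trees n) i))%:R).

Definition wvec (n : nat) (w : seq nat) : 'rV[K]_(size (words n)) :=
  \row_i ((nth w (words n) i == w)%:R).

Definition wfvec (n : nat) (s : seq (K * seq nat)) : 'rV[K]_(size (words n)) :=
  \sum_(p <- s) p.1 *: wvec n p.2.

Definition wordAct (n : nat) (s : 'S_n) : 'M[K]_(size (words n)) :=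
  \matrix_(i, j) ((nth [::] (words n) j
                    == map (actn s) (nth [::] (words n) i))%:R).

(* expansion in the free associative algebra, [u,v] = uv - vu *)
Fixpoint expand (t : tr) : seq (K * seq nat) :=
  match t with
  | Lf x => [:: (1, [:: x])]
  | Br l r =>
      [seq (a.1 * b.1, a.2 ++ b.2) | a <- expand l, b <- expand r]
   ++ [seq (- (a.1 * b.1), b.2 ++ a.2) | a <- expand l, b <- expand r]
  | Pr l r => [seq (a.1 * b.1, a.2 ++ b.2) | a <- expand l, b <- expand r]
  end.

Fixpoint brOnly (t : tr) : bool :=
  match t with Lf _ => true | Br l r => brOnly l && brOnly r | Pr _ _ => false end.

Definition LieGen (n : nat) : seq tr := [seq t <- trees n | brOnly t].

(* rows span Lie(n) = multilinear Lie polynomials, inside Ass(n) *)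
Definition LieMx (n : nat) : 'M[K]_(size (LieGen n), size (words n)) :=
  \matrix_(i < size (LieGen n)) wfvec n (expand (nth (Lf 0) (LieGen n) i)).

(* target Lie(n) (+) Ass(n) inside K^words (+) K^words, with diagonal action *)
Definition LieAssMx (n : nat) :=
  block_mx (LieMx n) 0 0 (1%:M : 'M[K]_(size (words n))).

Definition LieAssAct (n : nat) (s : 'S_n) : 'M[K]_(size (words n) + size (words n)) :=
  block_mx (wordAct s) 0 0 (wordAct s).

(* Isomorphism of S_n-modules  K^N / rowspace R  ~=  rowspace W  (W stable
   under Q): an S_n-equivariant linear map K^N -> K^m with kernel rowspace R
   and image rowspace W. *)
Definition quot_iso (n N m r k : nat) (R : 'M[K]_(r, N)) (P : 'S_n -> 'M[K]_N)
    (W : 'M[K]_(k, m)) (Q : 'S_n -> 'M[K]_m) : Prop :=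
  exists F : 'M[K]_(N, m),
    [/\ (kermx F == R)%MS, (F == W)%MS & forall s, P s *m F = F *m Q s].

End Spaces.

(* Main.v *)
Require Import Defs.
From HB Require Import structures.
From mathcomp Require Import all_boot all_order fingroup perm all_algebra.
From mathcomp Require Import ring zify.
Set Implicit Arguments. Unset Strict Implicit. Unset Printing Implicit Defensive.
Import GRing.Theory.
Local Open Scope ring_scope.

Section Alg.
Variable K : fieldType.
Implicit Types f g h : seq nat -> K.

Fixpoint fmul f g (w : seq nat) {struct w} : K :=
  match w with
  | [::] => f [::] * g [::]
  | x :: w' => f [::] * g w + fmul (fun u => f (x :: u)) g w'
  end.

Lemma eq_mul f f' g g' w : f =1 f' -> g =1 g' -> fmul f g w = fmul f' g' w.
Proof.
elim: w f f' => [|x w IH] f f' ef eg /=; first by rewrite ef eg.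
by rewrite ef eg (IH _ (fun u => f' (x :: u))).
Qed.

Lemma mDl f h g w :
  fmul (fun u => f u + h u) g w = fmul f g w + fmul h g w.
Proof.
elim: w f h => [|x w IH] f h /=; first by rewrite mulrDl.
by rewrite IH mulrDl; ring.
Qed.

Lemma mZl k f g w : fmul (fun u => k * f u) g w = k * fmul f g w.
Proof.
elim: w f => [|x w IH] f /=; first by rewrite mulrA.
by rewrite IH mulrDr mulrA.
Qed.

Lemma mNl f g w : fmul (fun u => - f u) g w = - fmul f g w.
Proof.
rewrite -mulN1r -mZl; apply: eq_mul => // u; by rewrite mulN1r.
Qed.

Lemma mBl f h g w :
  fmul (fun u => f u - h u) g w = fmul f g w - fmul h g w.
Proof. by rewrite mDl mNl. Qed.

Lemma m0l g w : fmul (fun _ => 0) g w = 0.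
Proof. by elim: w => [|x w IH] /=; rewrite ?IH mul0r ?addr0. Qed.

Lemma mDr f g h w :
  fmul f (fun u => g u + h u) w = fmul f g w + fmul f h w.
Proof.
elim: w f => [|x w IH] f /=; first by rewrite mulrDr.
by rewrite IH mulrDr; ring.
Qed.

Lemma mZr k f g w : fmul f (fun u => k * g u) w = k * fmul f g w.
Proof.
elim: w f => [|x w IH] f /=; first by rewrite mulrCA.
by rewrite IH mulrDr mulrCA.
Qed.

Lemma mNr f g w : fmul f (fun u => - g u) w = - fmul f g w.
Proof.
rewrite -mulN1r -mZr; apply: eq_mul => // u; by rewrite mulN1r.
Qed.

Lemma mBr f g h w :
  fmul f (fun u => g u - h u) w = fmul f g w - fmul f h w.
Proof. by rewrite mDr mNr. Qed.

Lemma m0r g w : fmul g (fun _ => 0) w = 0.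
Proof. by elim: w g => [|x w IH] g /=; rewrite ?IH mulr0 ?addr0. Qed.

Lemma mA f g h w : fmul (fun u => fmul f g u) h w = fmul f (fun u => fmul g h u) w.
Proof.
elim: w f => [|x w IH] f /=; first by rewrite mulrA.
rewrite mDl mZl IH; ring.
Qed.

Lemma msuml (I : Type) (c : seq I) (F : I -> seq nat -> K) g w :
  fmul (fun u => \sum_(p <- c) F p u) g w = \sum_(p <- c) fmul (F p) g w.
Proof.
elim: c => [|p c IH]; first by rewrite big_nil (@eq_mul _ (fun _ => 0) g g) ?m0l // => u; rewrite big_nil.
rewrite big_cons -IH -mDl; apply: eq_mul => // u; by rewrite big_cons.
Qed.

Lemma msumr (I : Type) (c : seq I) (F : I -> seq nat -> K) g w :
  fmul g (fun u => \sum_(p <- c) F p u) w = \sum_(p <- c) fmul g (F p) w.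
Proof.
elim: c => [|p c IH]; first by rewrite big_nil (@eq_mul g g _ (fun _ => 0)) ?m0r // => u; rewrite big_nil.
rewrite big_cons -IH -mDr; apply: eq_mul => // u; by rewrite big_cons.
Qed.

Definition dW (v : seq nat) : seq nat -> K := fun u => (u == v)%:R.

Lemma mul_dnil g w : fmul (dW [::]) g w = g w.
Proof.
case: w => [|x w] /=; first by rewrite /dW eqxx mul1r.
rewrite /dW eqxx mul1r (@eq_mul _ (fun _ => 0) g g) ?m0l ?addr0 //.
Qed.

Lemma mul_dW x y w : fmul (dW x) (dW y) w = (w == x ++ y)%:R.
Proof.
elim: x w => [|a x IH] w; first by rewrite mul_dnil.
case: w => [|b w] /=; first by rewrite /dW /= mul0r.
rewrite {1}/dW /= mul0r add0r.
rewrite (@eq_mul _ (fun u => (b == a)%:R * dW x u) (dW y) (dW y)) //.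
  by rewrite mZl IH eqseq_cons; case: (b == a); rewrite ?mul1r ?mul0r.
by move=> u; rewrite /dW eqseq_cons; case: (b == a); rewrite ?mul1r ?mul0r.
Qed.

Lemma mul_dr1 f y v z : fmul f (dW [:: y]) (rcons v z) = (z == y)%:R * f v.
Proof.
elim: v f => [|a v IH] f /=.
  rewrite /dW /= !eqseq_cons !andbT mulr0 addr0 mulrC.
  by case: (z == y); rewrite ?eqxx.
rewrite IH {1}/dW /=.
have -> : (a :: rcons v z == [:: y]) = false.
  by rewrite eqseq_cons; case: v {IH} => [|b v]; rewrite /= andbF.
by rewrite mulr0 add0r.
Qed.

Lemma mul_dr0 f y : fmul f (dW [:: y]) [::] = 0.
Proof. by rewrite /= /dW mulr0. Qed.

Lemma mul_dl1 y g x w : fmul (dW [:: y]) g (x :: w) = (x == y)%:R * g w.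
Proof.
rewrite /= {1}/dW /= mul0r add0r.
rewrite (@eq_mul _ (fun u => (x == y)%:R * dW [::] u) g g) ?mZl ?mul_dnil //.
move=> u; rewrite /dW eqseq_cons; by case: (x == y); rewrite ?mul1r ?mul0r.
Qed.

Lemma mul_map (psi : nat -> nat) f g u :
  fmul (fun v => f (map psi v)) (fun v => g (map psi v)) u = fmul f g (map psi u).
Proof.
elim: u f => [|x u IH] f //=.
by rewrite -IH.
Qed.

End Alg.


Lemma leaves_gt0 t : (0 < size (leaves t))%N.
Proof. by elim: t => [x|l IHl r IHr|l IHl r IHr] //=; rewrite size_cat addn_gt0 IHl. Qed.

Lemma gen_sound n f k t : t \in gen n f k ->
  size (leaves t) = k /\ all (fun x => x < n)%N (leaves t).
Proof.
elim: f k t => [//|f IH] k t /=.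
case: ifP => [/eqP-> | _].
  by move/mapP => [x]; rewrite mem_iota => /andP[_ ?] ->; rewrite /= andbT.
move/flatten_mapP => [i]; rewrite mem_iota => /andP [i1 ik].
move/flatten_mapP => [l /IH [sl al]] /flatten_mapP [r /IH [sr ar]].
rewrite !inE => /orP [] /eqP -> /=; rewrite size_cat all_cat al ar sl sr; split=> //; lia.
Qed.

Lemma gen_complete n f k t : (k <= f)%N -> size (leaves t) = k ->
  all (fun x => x < n)%N (leaves t) -> t \in gen n f k.
Proof.
elim: f k t => [|f IH] k t kf sk al.
  by move: (leaves_gt0 t); rewrite sk; lia.
rewrite /=; case: ifP => [/eqP k1|k1].
  case: t sk al => [x|l r|l r] /=.
  - by move=> _; rewrite andbT => xn; apply: map_f; rewrite mem_iota /=; lia.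
  - by rewrite size_cat k1 => h; move: (leaves_gt0 l) (leaves_gt0 r); lia.
  - by rewrite size_cat k1 => h; move: (leaves_gt0 l) (leaves_gt0 r); lia.
have [l [r [ht|ht]]] : exists l r, t = Br l r \/ t = Pr l r.
  case: t sk {al} => [x|l r|l r] /=; last 2 first.
  - by move=> _; exists l, r; left.
  - by move=> _; exists l, r; right.
  by move/eqP: k1 => k1 h; rewrite -h in k1.
all: subst t; move: sk al => /= sk; rewrite all_cat => /andP [al ar];
  rewrite size_cat in sk; apply/flatten_mapP; exists (size (leaves l)).
1,3: by rewrite mem_iota; move: (leaves_gt0 l) (leaves_gt0 r); lia.
all: apply/flatten_mapP; exists l;
  [apply: IH => //; move: (leaves_gt0 l) (leaves_gt0 r); lia|].
all: apply/flatten_mapP; exists r;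
  [apply: IH => //; move: (leaves_gt0 l) (leaves_gt0 r); lia|].
all: by rewrite !inE eqxx ?orbT.
Qed.

Lemma mem_trees n t : (t \in trees n) = perm_eq (leaves t) (iota 0 n).
Proof.
rewrite /trees mem_undup mem_filter.
case p: (perm_eq _ _) => //=.
have sz : size (leaves t) = n by rewrite (perm_size p) size_iota.
apply: gen_complete => //.
apply/allP => x; rewrite (perm_mem p) mem_iota; lia.
Qed.

Lemma uniq_trees n : uniq (trees n).
Proof. exact: undup_uniq. Qed.

Lemma leaves_relabel f t : leaves (relabel f t) = map f (leaves t).
Proof. by elim: t => [x|l IHl r IHr|l IHl r IHr] //=; rewrite map_cat IHl IHr. Qed.

Lemma actn_lt n (s : 'S_n) x : (actn s x < n)%N = (x < n)%N.
Proof.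
rewrite /actn; case: insubP => [i xi _ /=|/negbTE-> //]; by rewrite ltn_ord xi.
Qed.

Lemma actnK n (s : 'S_n) : cancel (actn s) (actn s^-1).
Proof.
move=> x; rewrite /actn; case: insubP => [i xi vi /=|xn]; last first.
  by rewrite /= insubF //; apply/negbTE.
by rewrite valK /= permK.
Qed.

Lemma actn_inj n (s : 'S_n) : injective (actn s).
Proof. exact: can_inj (actnK s). Qed.

Lemma actnKV n (s : 'S_n) : cancel (actn s^-1) (actn s).
Proof. by move=> x; have := actnK s^-1 x; rewrite invgK. Qed.

Lemma perm_actn_iota n (s : 'S_n) : perm_eq (map (actn s) (iota 0 n)) (iota 0 n).
Proof.
apply: uniq_perm; first by rewrite map_inj_uniq ?iota_uniq //; apply: actn_inj.
  exact: iota_uniq.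
move=> x; rewrite mem_iota /=; apply/mapP/idP => [[y]|xn].
  by rewrite mem_iota /= => yn ->; rewrite actn_lt.
by exists (actn s^-1 x); rewrite ?actnKV // mem_iota actn_lt.
Qed.

Lemma perm_map_actn n (s : 'S_n) w : perm_eq w (iota 0 n) -> perm_eq (map (actn s) w) (iota 0 n).
Proof.
move=> p; apply: perm_trans (perm_actn_iota s); exact: perm_map.
Qed.

Lemma relabel_trees n (s : 'S_n) t : t \in trees n -> relabel (actn s) t \in trees n.
Proof. by rewrite !mem_trees leaves_relabel; apply: perm_map_actn. Qed.

Lemma mem_words n w : (w \in words n) = perm_eq w (iota 0 n).
Proof. by rewrite /words mem_permutations. Qed.

Lemma uniq_words n : uniq (words n).
Proof. exact: permutations_uniq. Qed.


Section Sem.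
Variable K : fieldType.
Implicit Types f g h : seq nat -> K.

Fixpoint Lt (t : tr) : seq nat -> K :=
  match t with
  | Lf x => dW K [:: x]
  | Br l r => fun u => fmul (Lt l) (Lt r) u - fmul (Lt r) (Lt l) u
  | Pr _ _ => fun _ => 0
  end.

Fixpoint Pt (t : tr) : seq nat -> K :=
  match t with
  | Lf x => dW K [:: x]
  | Br _ _ => fun _ => 0
  | Pr l r => fmul (Pt l) (Lt r)
  end.

Definition Lsum (c : seq (K * tr)) u := \sum_(p <- c) p.1 * Lt p.2 u.
Definition Psum (c : seq (K * tr)) u := \sum_(p <- c) p.1 * Pt p.2 u.

Lemma sum_mull (c : seq (K * tr)) (H : tr -> seq nat -> K) g u :
  \sum_(p <- c) p.1 * fmul (H p.2) g u = fmul (fun v => \sum_(p <- c) p.1 * H p.2 v) g u.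
Proof. rewrite msuml; apply: eq_bigr => p _; by rewrite mZl. Qed.

Lemma sum_mulr (c : seq (K * tr)) (H : tr -> seq nat -> K) g u :
  \sum_(p <- c) p.1 * fmul g (H p.2) u = fmul g (fun v => \sum_(p <- c) p.1 * H p.2 v) u.
Proof. rewrite msumr; apply: eq_bigr => p _; by rewrite mZr. Qed.

Lemma jacobi f g h u :
  fmul f (fun v => fmul g h v - fmul h g v) u - fmul (fun v => fmul g h v - fmul h g v) f u +
  (fmul g (fun v => fmul h f v - fmul f h v) u - fmul (fun v => fmul h f v - fmul f h v) g u) +
  (fmul h (fun v => fmul f g v - fmul g f v) u - fmul (fun v => fmul f g v - fmul g f v) h u) = 0.
Proof. rewrite !mBr !mBl !mA; ring. Qed.

Lemma sum_zero (c : seq (K * tr)) (H : tr -> seq nat -> K) :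
  \sum_(p <- c) p.1 * 0 = 0 :> K.
Proof. by rewrite big1 // => p _; rewrite mulr0. Qed.

Lemma rel_root_sem t (c : seq (K * tr)) : c \in rel_root K t ->
  forall u, Lsum c u = 0 /\ Psum c u = 0.
Proof.
rewrite /Lsum /Psum.
case: t => [x|a b|a b] //=.
- move=> hc u; have [-> | ] : c = [:: (1, Br a b); (1, Br b a)] \/ c \in
   ((if b is Br b0 c0 then [:: [:: (1, Br a (Br b0 c0)); (1, Br b0 (Br c0 a)); (1, Br c0 (Br a b0))]] else [::])
    ++ (if a is Pr a0 b0 then [:: [:: (1, Br (Pr a0 b0) b)]] else [::])).
    move: hc; rewrite inE => /orP [/eqP->|]; first by left.
    by case: a => [?|??|??]; case: b => [?|??|??] //=; rewrite ?cats0 ?inE; right.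
  + rewrite !big_cons !big_nil /= !mul1r ?mulr0 !addr0; split; ring.
  rewrite mem_cat => /orP [].
    case: b {hc} => // b0 c0; rewrite inE => /eqP ->.
    rewrite !big_cons !big_nil /= !mul1r ?addr0 ?add0r; split => //.
    by rewrite -[RHS](jacobi (Lt a) (Lt b0) (Lt c0) u) addrA.
  case: a {hc} => // a0 a1; rewrite inE => /eqP ->.
  by rewrite !big_cons !big_nil /= !mul1r !addr0 m0l m0r subrr.
rewrite /rel_root /= !mem_cat => /orP [|/orP []].
- case: a => // a0 a1; rewrite inE => /eqP -> u.
  by rewrite !big_cons !big_nil /= !mul1r !addr0 m0l.
- case: b => // b0 b1; rewrite inE => /eqP -> u.
  by rewrite !big_cons !big_nil /= !mul1r !addr0 m0r.
- case: b => // b0 c0; rewrite inE => /eqP -> u.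
  rewrite !big_cons !big_nil /= !mul1r ?mulr0 ?addr0; split => //.
  rewrite mBr !mA; ring.
Qed.


Lemma fmul_eq0l f g u : (forall v, f v = 0) -> fmul f g u = 0.
Proof. by move=> h; rewrite (@eq_mul _ f (fun _ => 0) g g) ?m0l. Qed.

Lemma fmul_eq0r f g u : (forall v, g v = 0) -> fmul f g u = 0.
Proof. by move=> h; rewrite (@eq_mul _ f f g (fun _ => 0)) ?m0r. Qed.

Lemma all_rels_Br l r : all_rels K (Br l r) = rel_root K (Br l r) ++
  [seq [seq (p.1, Br p.2 r) | p <- c] | c <- all_rels K l]
  ++ [seq [seq (p.1, Br l p.2) | p <- c] | c <- all_rels K r].
Proof. by []. Qed.
Lemma all_rels_Pr l r : all_rels K (Pr l r) = rel_root K (Pr l r) ++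
  [seq [seq (p.1, Pr p.2 r) | p <- c] | c <- all_rels K l]
  ++ [seq [seq (p.1, Pr l p.2) | p <- c] | c <- all_rels K r].
Proof. by []. Qed.
Lemma all_rels_Lf x : all_rels K (Lf x) = [::].
Proof. by []. Qed.

Lemma all_rels_sem t (c : seq (K * tr)) : c \in all_rels K t ->
  forall u, Lsum c u = 0 /\ Psum c u = 0.
Proof.
elim: t c => [x|l IHl r IHr|l IHl r IHr] c.
- by rewrite all_rels_Lf.
- rewrite all_rels_Br mem_cat => /orP [h|]; first by move=> u; have := rel_root_sem h u.
  rewrite mem_cat => /orP [/mapP [d hd ->]|/mapP [d hd ->]] u.
  + have IH := IHl _ hd; rewrite /Lsum /Psum !big_map /=; split; last first.
      by rewrite big1 // => p _; rewrite mulr0.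
    under eq_bigr do rewrite mulrBr.
    have H0 : forall v, \sum_(p <- d) p.1 * Lt p.2 v = 0 by move=> v; case: (IH v).
    by rewrite sumrB sum_mull sum_mulr (fmul_eq0l _ _ H0) (fmul_eq0r _ _ H0) subrr.
  + have IH := IHr _ hd; rewrite /Lsum /Psum !big_map /=; split; last first.
      by rewrite big1 // => p _; rewrite mulr0.
    under eq_bigr do rewrite mulrBr.
    have H0 : forall v, \sum_(p <- d) p.1 * Lt p.2 v = 0 by move=> v; case: (IH v).
    by rewrite sumrB sum_mull sum_mulr (fmul_eq0l _ _ H0) (fmul_eq0r _ _ H0) subrr.
- rewrite all_rels_Pr mem_cat => /orP [h|]; first by move=> u; have := rel_root_sem h u.
  rewrite mem_cat => /orP [/mapP [d hd ->]|/mapP [d hd ->]] u.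
  + have IH := IHl _ hd; rewrite /Lsum /Psum !big_map /=; split.
      by rewrite big1 // => p _; rewrite mulr0.
    rewrite sum_mull fmul_eq0l // => v; by case: (IH v).
  + have IH := IHr _ hd; rewrite /Lsum /Psum !big_map /=; split.
      by rewrite big1 // => p _; rewrite mulr0.
    rewrite sum_mulr fmul_eq0r // => v; by case: (IH v).
Qed.

End Sem.


Ltac permtac := apply/seq.permP => q; rewrite /= ?count_cat /=; lia.

Ltac memcase tac := match goal with
 | |- is_true (_ \in _ :: _) -> _ => rewrite in_cons => /orP []; [move=> /eqP ->; tac | memcase tac]
 | |- is_true (_ \in [::]) -> _ => by rewrite in_nil
 end.

Lemma rel_root_leaves (K : fieldType) t (c : seq (K * tr)) : c \in rel_root K t ->
  forall p, p \in c -> perm_eq (leaves p.2) (leaves t).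
Proof.
case: t => [x|a b|a b]; first by [].
all: case: a => [?|??|??]; case: b => [?|??|??]; rewrite /rel_root /= ?cats0;
  memcase ltac:(move=> p; memcase ltac:(permtac)).
Qed.

Lemma all_rels_leaves (K : fieldType) t (c : seq (K * tr)) : c \in all_rels K t ->
  forall p, p \in c -> perm_eq (leaves p.2) (leaves t).
Proof.
elim: t c => [x|l IHl r IHr|l IHl r IHr] c.
- by rewrite all_rels_Lf.
- rewrite all_rels_Br mem_cat => /orP [h|]; first exact: rel_root_leaves h.
  rewrite mem_cat => /orP [/mapP [d hd ->]|/mapP [d hd ->]] p /mapP [q hq ->] /=.
    by rewrite perm_cat2r (IHl _ hd).
  by rewrite perm_cat2l (IHr _ hd).
- rewrite all_rels_Pr mem_cat => /orP [h|]; first exact: rel_root_leaves h.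
  rewrite mem_cat => /orP [/mapP [d hd ->]|/mapP [d hd ->]] p /mapP [q hq ->] /=.
    by rewrite perm_cat2r (IHl _ hd).
  by rewrite perm_cat2l (IHr _ hd).
Qed.

Lemma sum_nth (K : fieldType) (T0 : eqType) (s : seq T0) x0 d t (G : T0 -> K) :
  uniq s -> t \in s ->
  \sum_(i < size s) (nth x0 s i == t)%:R * G (nth d s i) = G t.
Proof.
move=> us ts; have hi : (index t s < size s)%N by rewrite index_mem.
rewrite (bigD1 (Ordinal hi)) //= nth_index // eqxx mul1r.
rewrite (set_nth_default t d hi) nth_index // big1 ?addr0 // => i /eqP ne.
case: eqP => [e|]; last by rewrite mul0r.
by exfalso; apply: ne; apply: val_inj => /=; rewrite -e index_uniq.
Qed.

Lemma Lt_relabel (K : fieldType) (phi psi : nat -> nat) :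
  cancel phi psi -> cancel psi phi ->
  forall t u, Lt K (relabel phi t) u = Lt K t (map psi u).
Proof.
move=> h1 h2; elim=> [x|l IHl r IHr|l IHl r IHr] u //=.
- rewrite /dW.
  by rewrite -(inj_eq (inj_map (can_inj h2))) /= h1.
- by rewrite (eq_mul _ IHl IHr) (eq_mul _ IHr IHl) !mul_map.
Qed.

Lemma Pt_relabel (K : fieldType) (phi psi : nat -> nat) :
  cancel phi psi -> cancel psi phi ->
  forall t u, Pt K (relabel phi t) u = Pt K t (map psi u).
Proof.
move=> h1 h2; elim=> [x|l IHl r IHr|l IHl r IHr] u //=.
- rewrite /dW.
  by rewrite -(inj_eq (inj_map (can_inj h2))) /= h1.
- by rewrite (eq_mul _ IHl (Lt_relabel K h1 h2 r)) mul_map.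
Qed.

Section Mx.
Variable K : fieldType.
Variable n : nat.
Local Notation T := (trees n).
Local Notation W := (words n).

Definition Lrow t : 'rV[K]_(size W) := \row_j Lt K t (nth [::] W j).
Definition Prow t : 'rV[K]_(size W) := \row_j Pt K t (nth [::] W j).
Definition Gr t := row_mx (Lrow t) (Prow t).
Definition Hm m (H : tr -> 'rV[K]_m) : 'M_(size T, m) :=
  \matrix_(i < size T) H (nth (Lf 0) T i).

Lemma tvec_Hm m (H : tr -> 'rV[K]_m) t : t \in T -> tvec K n t *m Hm H = H t.
Proof.
move=> tT; apply/rowP => j; rewrite !mxE.
under eq_bigr do rewrite !mxE.
exact: (@sum_nth K _ T t (Lf 0) t (fun t => H t 0 j) (uniq_trees n) tT).
Qed.

Lemma row_Hm m (H : tr -> 'rV[K]_m) i : row i (Hm H) = H (nth (Lf 0) T i).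
Proof. by rewrite rowK. Qed.

Lemma Hm_equiv m (H : tr -> 'rV[K]_m) (Q : 'M_m) (s : 'S_n) :
  (forall t, t \in T -> H t *m Q = H (relabel (actn s) t)) ->
  treeAct K s *m Hm H = Hm H *m Q.
Proof.
move=> hH; apply/row_matrixP => i; rewrite !row_mul row_Hm hH ?mem_nth //.
set t := relabel _ _.
have tT : t \in T by apply: relabel_trees; rewrite mem_nth.
rewrite -(tvec_Hm H tT); congr (_ *m _).
apply/rowP => j; rewrite !mxE.
by rewrite (set_nth_default t (Lf 0)).
Qed.

Lemma words_act (s : 'S_n) w w' : (w' == map (actn s) w) = (w == map (actn s^-1) w').
Proof.
apply/eqP/eqP => ->; first by rewrite -map_comp map_id_in // => x _ /=; rewrite actnK.
by rewrite -map_comp map_id_in // => x _ /=; rewrite actnKV.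
Qed.

Lemma row_act (F : seq nat -> K) (s : 'S_n) :
  (\row_j F (nth [::] W j)) *m wordAct K s = \row_j F (map (actn s^-1) (nth [::] W j)).
Proof.
apply/rowP => k; rewrite !mxE.
under eq_bigr do rewrite !mxE words_act mulrC.
apply: (@sum_nth K _ W [::] [::] _ F (uniq_words n)).
by rewrite mem_words perm_map_actn // -mem_words mem_nth.
Qed.

Lemma Lrow_act (s : 'S_n) t : Lrow t *m wordAct K s = Lrow (relabel (actn s) t).
Proof.
rewrite /Lrow row_act; apply/rowP => k; rewrite !mxE.
by rewrite (Lt_relabel K (actnK s) (actnKV s)).
Qed.

Lemma Prow_act (s : 'S_n) t : Prow t *m wordAct K s = Prow (relabel (actn s) t).
Proof.
rewrite /Prow row_act; apply/rowP => k; rewrite !mxE.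
by rewrite (Pt_relabel K (actnK s) (actnKV s)).
Qed.

Lemma Gr_act (s : 'S_n) t : Gr t *m LieAssAct K s = Gr (relabel (actn s) t).
Proof.
by rewrite /Gr /LieAssAct mul_row_block !mulmx0 addr0 add0r Lrow_act Prow_act.
Qed.

Definition Fm := Hm Gr.

Lemma Fm_equiv (s : 'S_n) : treeAct K s *m Fm = Fm *m LieAssAct K s.
Proof. by apply: Hm_equiv => t _; rewrite Gr_act. Qed.

Lemma fvec_Hm m (H : tr -> 'rV[K]_m) (c : seq (K * tr)) :
  (forall p, p \in c -> p.2 \in T) ->
  fvec n c *m Hm H = \sum_(p <- c) p.1 *: H p.2.
Proof.
move=> hc; rewrite /fvec mulmx_suml big_seq_cond [RHS]big_seq_cond.
by apply: eq_bigr => p /andP [pc _]; rewrite -scalemxAl tvec_Hm // hc.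
Qed.

Lemma sum_Gr (c : seq (K * tr)) :
  \sum_(p <- c) p.1 *: Gr p.2 =
  row_mx (\row_j Lsum c (nth [::] W j)) (\row_j Psum c (nth [::] W j)).
Proof.
elim: c => [|p c IH].
  by rewrite big_nil -row_mx0; congr row_mx; apply/rowP => j; rewrite !mxE /Lsum /Psum big_nil.
rewrite big_cons IH /Gr scale_row_mx add_row_mx; congr row_mx; apply/rowP => j;
  by rewrite !mxE /Lsum /Psum big_cons.
Qed.

Lemma Rels_zero : ArbRel K n *m Fm = 0.
Proof.
apply/row_matrixP => i; rewrite row_mul rowK row0.
set c := nth _ _ _.
have : c \in Rels K n by rewrite mem_nth.
move/flatten_mapP => [t tT ct].
have hT : forall p, p \in c -> p.2 \in T.
  by move=> p pc; rewrite mem_trees (perm_trans (all_rels_leaves ct pc)) // -mem_trees.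
rewrite fvec_Hm // sum_Gr.
have h := all_rels_sem ct.
rewrite -row_mx0; congr row_mx; apply/rowP => j; rewrite !mxE; by case: (h (nth [::] W j)).
Qed.

End Mx.


Fixpoint isB t := match t with Lf _ => true
  | Br l r => isB l && (if r is Lf _ then true else false) | Pr _ _ => false end.
Fixpoint isP t := match t with Lf _ => true
  | Pr l r => isP l && (if r is Lf _ then true else false) | Br _ _ => false end.
Definition isLf t := if t is Lf _ then true else false.

Lemma isB_inj s s' : isB s -> isB s' -> leaves s = leaves s' -> s = s'.
Proof.
elim: s s' => [x|l IH r _|//] [x'|l' r'|//] //=.
- by move=> _ _ [->].
- move=> _ _ e; have := congr1 size e; rewrite /= size_cat.
  move: (leaves_gt0 l') (leaves_gt0 r'); lia.
- move=> _ _ e; have := congr1 size e; rewrite /= size_cat.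
  move: (leaves_gt0 l) (leaves_gt0 r); lia.
case: r => [y|??|??]; rewrite ?andbF ?andbT // => bl; case: r' => [y'|??|??]; rewrite ?andbF ?andbT // => bl'.
by rewrite /= !cats1 => /eqP; rewrite eqseq_rcons => /andP [/eqP /(IH _ bl bl') -> /eqP ->].
Qed.

Lemma isP_inj s s' : isP s -> isP s' -> leaves s = leaves s' -> s = s'.
Proof.
elim: s s' => [x|//|l IH r _] [x'|//|l' r'] //=.
- by move=> _ _ [->].
- move=> _ _ e; have := congr1 size e; rewrite /= size_cat.
  move: (leaves_gt0 l') (leaves_gt0 r'); lia.
- move=> _ _ e; have := congr1 size e; rewrite /= size_cat.
  move: (leaves_gt0 l) (leaves_gt0 r); lia.
case: r => [y|??|??]; rewrite ?andbF ?andbT // => bl; case: r' => [y'|??|??]; rewrite ?andbF ?andbT // => bl'.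
by rewrite /= !cats1 => /eqP; rewrite eqseq_rcons => /andP [/eqP /(IH _ bl bl') -> /eqP ->].
Qed.

Section NSem.
Variable K : fieldType.

Lemma Lt_nonbr t u : ~~ brOnly t -> Lt K t u = 0.
Proof.
elim: t u => [x|l IHl r IHr|l IHl r IHr] u //=.
rewrite negb_and => /orP [h|h].
  by rewrite !(fmul_eq0l _ _ (IHl^~ h)) (fmul_eq0r _ _ (IHl^~ h)) subrr.
by rewrite !(fmul_eq0r _ _ (IHr^~ h)) (fmul_eq0l _ _ (IHr^~ h)) subrr.
Qed.

Lemma Pt_isP t u : isP t -> Pt K t u = (u == leaves t)%:R.
Proof.
elim: t u => [x|//|l IHl r _] u //= /andP [pl]; case: r => // y _.
case/lastP: u => [|v z]; first by rewrite mul_dr0; case: (leaves l) (leaves_gt0 l).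
rewrite mul_dr1 IHl // cats1 eqseq_rcons.
by case: (z == y); case: (v == leaves l); rewrite /= ?mulr1 ?mulr0 ?mul0r.
Qed.

Lemma Lt_isB t u : isB t -> uniq (leaves t) -> u != [::] ->
  head 0%N u = head 0%N (leaves t) -> Lt K t u = (u == leaves t)%:R.
Proof.
elim: t u => [x|l IHl r _|//] u //= /andP [bl]; case: r => // y _.
rewrite cat_uniq /= orbF andbT => /andP [ul yl] un.
have hl : head 0%N (leaves l ++ [:: y]) = head 0%N (leaves l).
  by case: (leaves l) (leaves_gt0 l).
have hin : head 0%N (leaves l) \in leaves l.
  by case: (leaves l) (leaves_gt0 l) => //= a s _; rewrite inE eqxx.
have hne : head 0%N (leaves l) != y.
  by apply/eqP => e; move: yl; rewrite -e hin.
rewrite hl => hu.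
have -> : fmul (dW K [:: y]) (Lt K l) u = 0.
  case: u un hu => // x w _ hx; rewrite mul_dl1; move: hx => /= ->; rewrite (negbTE hne) mul0r //.
rewrite subr0.
case/lastP: u un hu => [//|v z] _.
rewrite mul_dr1 cats1 eqseq_rcons.
case: v => [|a v] /=.
  move=> hz; rewrite hz (negbTE hne) mul0r.
  by case: (leaves l) (leaves_gt0 l) => // b [|c s].
move=> ha; rewrite IHl //.
by case: (z == y); case: (_ == leaves l); rewrite /= ?mulr1 ?mulr0 ?mul0r.
Qed.

Lemma mul_coef (c d : seq (K * seq nat)) u :
  fmul (fun v => \sum_(a <- c) a.1 * (v == a.2)%:R) (fun v => \sum_(b <- d) b.1 * (v == b.2)%:R) u
  = \sum_(a <- c) \sum_(b <- d) a.1 * b.1 * (u == a.2 ++ b.2)%:R.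
Proof.
rewrite msuml; apply: eq_bigr => a _.
rewrite (@eq_mul _ _ (fun v => a.1 * dW K a.2 v) _ (fun v => \sum_(b <- d) b.1 * (v == b.2)%:R)) //.
rewrite mZl msumr big_distrr; apply: eq_bigr => b _ /=.
rewrite (@eq_mul _ _ (dW K a.2) _ (fun v => b.1 * dW K b.2 v)) // mZr mul_dW.
by rewrite mulrA.
Qed.

Lemma Lt_expand t u : brOnly t ->
  Lt K t u = \sum_(p <- expand K t) p.1 * (u == p.2)%:R.
Proof.
elim: t u => [x|l IHl r IHr|//] u /=.
  by rewrite big_seq1 mul1r.
case/andP => bl br.
rewrite (eq_mul _ (IHl^~ bl) (IHr^~ br)) (eq_mul _ (IHr^~ br) (IHl^~ bl)).
rewrite !mul_coef big_cat !big_allpairs_dep /=; congr (_ + _).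
rewrite exchange_big /= -sumrN; apply: eq_bigr => a _.
rewrite -sumrN; apply: eq_bigr => b _.
by rewrite mulNr [b.1 * _]mulrC.
Qed.

End NSem.


Inductive frame := FBl of tr | FBr of tr | FPl of tr | FPr of tr.
Definition fr (f : frame) (s : tr) :=
  match f with FBl r => Br s r | FBr l => Br l s | FPl r => Pr s r | FPr l => Pr l s end.
Definition plug (C : seq frame) (s : tr) := foldl (fun t f => fr f t) s C.

Lemma leaves_fr f s s' : perm_eq (leaves s) (leaves s') -> perm_eq (leaves (fr f s)) (leaves (fr f s')).
Proof. by case: f => t /= h; rewrite ?perm_cat2r ?perm_cat2l. Qed.

Lemma leaves_plug C s s' : perm_eq (leaves s) (leaves s') ->
  perm_eq (leaves (plug C s)) (leaves (plug C s')).
Proof. elim: C s s' => [|f C IH] s s' h //=; apply: IH; exact: leaves_fr. Qed.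

Lemma plug_trees n C s s' : plug C s \in trees n -> perm_eq (leaves s') (leaves s) ->
  plug C s' \in trees n.
Proof.
rewrite !mem_trees => h p; apply: perm_trans h; exact: leaves_plug.
Qed.

Section Red.
Variable K : fieldType.
Variable n : nat.
Local Notation T := (trees n).
Local Notation R := (ArbRel K n).

Definition mapc (g : tr -> tr) (c : seq (K * tr)) := [seq (p.1, g p.2) | p <- c].
Definition scalec (k : K) (c : seq (K * tr)) := [seq (k * p.1, p.2) | p <- c].

Lemma all_rels_fr f s (c : seq (K * tr)) : c \in all_rels K s -> mapc (fr f) c \in all_rels K (fr f s).
Proof.
case: f => t h; rewrite /fr ?all_rels_Br ?all_rels_Pr mem_cat; apply/orP; right;
  rewrite mem_cat; apply/orP; [left|right|left|right]; exact: (map_f _ h).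
Qed.

Lemma all_rels_plug C s (c : seq (K * tr)) : c \in all_rels K s ->
  mapc (plug C) c \in all_rels K (plug C s).
Proof.
elim: C s c => [|f C IH] s c h /=.
  by rewrite /mapc map_id_in // => -[].
have := IH _ _ (all_rels_fr f h); rewrite /mapc -map_comp; congr (_ \in _).
Qed.

Lemma rel_sub (c : seq (K * tr)) : c \in Rels K n -> (fvec n c <= R)%MS.
Proof.
move=> h; have hi : (index c (Rels K n) < size (Rels K n))%N by rewrite index_mem.
apply/(submx_trans _ (row_sub (Ordinal hi) R)); rewrite rowK /= nth_index //.
Qed.

Lemma root_sub C s (c : seq (K * tr)) : c \in rel_root K s -> plug C s \in T ->
  (fvec n (mapc (plug C) c) <= R)%MS.
Proof.
move=> hc hT; apply: rel_sub; apply/flatten_mapP; exists (plug C s) => //.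
apply: all_rels_plug; move: hc; clear hT.
case: s => [x|a b|a b] hc; [by move: hc; rewrite /rel_root |
  by rewrite all_rels_Br mem_cat hc | by rewrite all_rels_Pr mem_cat hc].
Qed.

Lemma fvec_cat (c d : seq (K * tr)) : fvec n (c ++ d) = fvec n c + fvec n d.
Proof. by rewrite /fvec big_cat. Qed.

Lemma fvec_nil : fvec n ([::] : seq (K * tr)) = 0.
Proof. by rewrite /fvec big_nil. Qed.

Lemma fvec_cons (p : K * tr) c : fvec n (p :: c) = p.1 *: tvec K n p.2 + fvec n c.
Proof. by rewrite /fvec big_cons. Qed.

Lemma fvec_scale k (c : seq (K * tr)) : fvec n (scalec k c) = k *: fvec n c.
Proof.
rewrite /fvec /scalec big_map scaler_sumr; apply: eq_bigr => p _ /=; by rewrite scalerA.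
Qed.

Definition red (s : tr) (c : seq (K * tr)) :=
  (forall p, p \in c -> perm_eq (leaves p.2) (leaves s)) /\
  (forall C, plug C s \in T -> (tvec K n (plug C s) - fvec n (mapc (plug C) c) <= R)%MS).

Definition RN (Q : pred tr) s := exists d, red s d /\ forall p, p \in d -> Q p.2.

Lemma red_refl s : red s [:: (1, s)].
Proof.
split; first by move=> p; rewrite inE => /eqP ->.
by move=> C _; rewrite /mapc /= fvec_cons fvec_nil scale1r addr0 subrr sub0mx.
Qed.

Lemma RN_self (Q : pred tr) s : Q s -> RN Q s.
Proof. by move=> h; exists [:: (1, s)]; split; [exact: red_refl | move=> p; rewrite inE => /eqP ->]. Qed.

Lemma red_root s d : (1, s) :: d \in rel_root K s -> red s [seq (- p.1, p.2) | p <- d].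
Proof.
move=> h; split.
  move=> p /mapP [q qd ->] /=; apply: (rel_root_leaves h); by rewrite inE qd orbT.
move=> C hC; have := root_sub h hC.
rewrite /mapc /= fvec_cons /= scale1r.
suff -> : fvec n [seq (p.1, plug C p.2) | p <- [seq (- p0.1, p0.2) | p0 <- d]]
  = - fvec n [seq (p.1, plug C p.2) | p <- d] by rewrite opprK.
rewrite /fvec !big_map -sumrN; apply: eq_bigr => p _ /=; by rewrite scaleNr.
Qed.

Lemma red_fr f s c : red s c -> red (fr f s) (mapc (fr f) c).
Proof.
move=> [h1 h2]; split.
  by move=> p /mapP [q qc ->] /=; apply: leaves_fr; apply: h1.
move=> C hC; have := h2 (f :: C) hC; congr (_ <= _)%MS; rewrite /mapc -map_comp //.
Qed.

Lemma RN_aux (Q : pred tr) s c :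
  (forall p, p \in c -> perm_eq (leaves p.2) (leaves s)) ->
  (forall p, p \in c -> RN Q p.2) ->
  exists d, [/\ (forall p, p \in d -> perm_eq (leaves p.2) (leaves s)),
               (forall p, p \in d -> Q p.2) &
    forall C, plug C s \in T ->
      (fvec n (mapc (plug C) c) - fvec n (mapc (plug C) d) <= R)%MS].
Proof.
elim: c => [|p c IH] hl hr.
  exists [::]; split => // C _; by rewrite /mapc /= fvec_nil subrr sub0mx.
have [|| d [d1 d2 d3]] := IH.
- by move=> q qc; apply: hl; rewrite inE qc orbT.
- by move=> q qc; apply: hr; rewrite inE qc orbT.
have [e [[e1 e2] e3]] := hr p (mem_head _ _).
have hp := hl p (mem_head _ _).
exists (scalec p.1 e ++ d); split.
- move=> q; rewrite mem_cat => /orP [/mapP [q' q'e ->]|qd] /=; last exact: d1.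
  exact: perm_trans (e1 _ q'e) hp.
- move=> q; rewrite mem_cat => /orP [/mapP [q' q'e ->]|qd] /=; last exact: d2.
  exact: e3.
move=> C hC.
have hpC : plug C p.2 \in T by apply: plug_trees hC hp.
have -> : mapc (plug C) (scalec p.1 e ++ d) = scalec p.1 (mapc (plug C) e) ++ mapc (plug C) d.
  by rewrite /mapc /scalec map_cat -!map_comp.
rewrite fvec_cat fvec_scale /mapc /= fvec_cons /=.
have -> : p.1 *: tvec K n (plug C p.2) + fvec n [seq (p0.1, plug C p0.2) | p0 <- c] -
    (p.1 *: fvec n (mapc (plug C) e) + fvec n (mapc (plug C) d)) =
    p.1 *: (tvec K n (plug C p.2) - fvec n (mapc (plug C) e)) +
    (fvec n (mapc (plug C) c) - fvec n (mapc (plug C) d)).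
  by rewrite scalerBr opprD addrACA.
by rewrite addmx_sub ?scalemx_sub ?e2 // d3.
Qed.

Lemma RN_trans (Q : pred tr) s c : red s c -> (forall p, p \in c -> RN Q p.2) -> RN Q s.
Proof.
move=> [h1 h2] h3; have [d [d1 d2 d3]] := RN_aux h1 h3.
exists d; split => //; split => // C hC.
have -> : tvec K n (plug C s) - fvec n (mapc (plug C) d) =
  (tvec K n (plug C s) - fvec n (mapc (plug C) c)) + (fvec n (mapc (plug C) c) - fvec n (mapc (plug C) d)).
  by rewrite addrA subrK.
by rewrite addmx_sub ?h2 ?d3.
Qed.

Lemma RN_fr (Q Q' : pred tr) f s : RN Q s -> (forall t, Q t -> RN Q' (fr f t)) -> RN Q' (fr f s).
Proof.
move=> [d [hd hQ]] h; apply: (RN_trans (red_fr f hd)).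
by move=> p /mapP [q qd ->] /=; apply: h; apply: hQ.
Qed.

Lemma RN_nil (Q : pred tr) s : red s [::] -> RN Q s.
Proof. by move=> h; exists [::]. Qed.

Lemma RN_mono (Q Q' : pred tr) s : (forall t, Q t -> Q' t) -> RN Q s -> RN Q' s.
Proof. by move=> h [d [hd hq]]; exists d; split => // p /hq /h. Qed.

End Red.


Section Rules.
Variable K : fieldType.
Variable n : nat.
Local Notation RN := (@RN K n).

Lemma RN_root (Q : pred tr) s (d : seq (K * tr)) : (1, s) :: d \in rel_root K s ->
  (forall q, q \in d -> RN Q q.2) -> RN Q s.
Proof.
move=> h hd; apply: (@RN_trans K n Q s _ (red_root n h)).
move=> p /mapP [q qd ->] /=; exact: hd.
Qed.

Ltac memtac := rewrite /rel_root /= ?mem_cat ?inE ?mem_cat ?inE ?eqxx ?orbT //.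
Ltac fintac := move=> q; rewrite ?inE => /orP [] /eqP -> //.

Lemma RN_anti (Q : pred tr) a b : RN Q (Br b a) -> RN Q (Br a b).
Proof.
move=> h; apply: (@RN_root _ _ [:: (1, Br b a)]); first by memtac.
by move=> q; rewrite inE => /eqP ->.
Qed.

Lemma RN_jac (Q : pred tr) a b c : RN Q (Br b (Br c a)) -> RN Q (Br c (Br a b)) ->
  RN Q (Br a (Br b c)).
Proof.
move=> h1 h2; apply: (@RN_root _ _ [:: (1, Br b (Br c a)); (1, Br c (Br a b))]).
  by memtac.
by move=> q; rewrite !inE => /orP [] /eqP ->.
Qed.

Lemma RN_z1 (Q : pred tr) a b c : RN Q (Pr (Br a b) c).
Proof. apply: (@RN_root _ _ [::]) => //; by memtac. Qed.

Lemma RN_z2 (Q : pred tr) a b c : RN Q (Pr a (Pr b c)).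
Proof. apply: (@RN_root _ _ [::]) => //; by memtac. Qed.

Lemma RN_z3 (Q : pred tr) a b c : RN Q (Br (Pr a b) c).
Proof. apply: (@RN_root _ _ [::]) => //; by memtac. Qed.

Lemma RN_pb (Q : pred tr) a b c : RN Q (Pr (Pr a b) c) -> RN Q (Pr (Pr a c) b) ->
  RN Q (Pr a (Br b c)).
Proof.
move=> h1 h2; apply: (@RN_root _ _ [:: (-1, Pr (Pr a b) c); (1, Pr (Pr a c) b)]).
  by memtac.
by move=> q; rewrite !inE => /orP [] /eqP ->.
Qed.

Definition Qm m t := isB t && (head 0%N (leaves t) == m).

Lemma headB p x : head 0%N (leaves p ++ [:: x]) = head 0%N (leaves p).
Proof. by case: (leaves p) (leaves_gt0 p). Qed.

Lemma LA m q : brOnly q -> forall p, Qm m p -> RN (Qm m) (Br p q).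
Proof.
elim: q => [x|q1 IH1 q2 IH2|//] /=.
  move=> _ p hp; apply: RN_self; move: hp; by rewrite /Qm /= andbT headB.
case/andP => b1 b2 p hp; apply: RN_jac.
  apply: RN_anti; apply: (@RN_fr _ _ (Qm m) _ (FBl q1) (Br q2 p)); first by apply: RN_anti; exact: IH2.
  by move=> t ht; exact: IH1.
apply: RN_anti; apply: (@RN_fr _ _ (Qm m) _ (FBl q2) (Br p q1)); first exact: IH1.
by move=> t ht; exact: IH2.
Qed.

Lemma LB m t : brOnly t -> m \in leaves t -> RN (Qm m) t.
Proof.
elim: t => [x|u IHu v IHv|//] /=.
  by move=> _; rewrite inE => /eqP ->; apply: RN_self; rewrite /Qm /= eqxx.
case/andP => bu bv; rewrite mem_cat => /orP [hm|hm].
  apply: (@RN_fr _ _ (Qm m) _ (FBl v) u); first exact: IHu.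
  by move=> t ht; exact: LA.
apply: RN_anti; apply: (@RN_fr _ _ (Qm m) _ (FBl u) v); first exact: IHv.
by move=> t ht; exact: LA.
Qed.

Definition QP t := isP t && ~~ isLf t.

Lemma ZB (Q : pred tr) u v : RN QP u -> RN Q (Br u v).
Proof.
move=> h; apply: (@RN_fr _ _ QP _ (FBl v) u h) => t.
by case: t => // a b _; exact: RN_z3.
Qed.

Fixpoint wt t := match t with Lf _ => 1%N | Br l r => (wt l + wt r + 2)%N
  | Pr l r => (wt l + wt r).+1 end.

Lemma Prod t : ~~ brOnly t -> RN QP t.
Proof.
move: {2}(wt t).+1 (ltnSn (wt t)) => N; elim: N t => [//|N IH] t ht.
case: t ht => [x|u v|u v] /= ht hb //.
- case bu: (brOnly u).
    apply: RN_anti; apply: ZB; apply: IH; first by lia.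
    by move: hb; rewrite bu.
  by apply: ZB; apply: IH; [lia | rewrite bu].
- case: v ht => [y|b c|b c] ht.
  + case: u ht => [x|a b|a b] ht.
    * by apply: RN_self.
    * exact: RN_z1.
    * apply: (@RN_fr _ _ QP _ (FPl (Lf y)) (Pr a b)); first by apply: IH => //=; move: ht => /= ht; lia.
      by move=> t /andP [pt _]; apply: RN_self; rewrite /QP /= pt.
  + by apply: RN_pb; apply: IH => //=; move: ht => /= ht; lia.
  + exact: RN_z2.
Qed.

Definition NF t := (isB t && (head 0%N (leaves t) == 0%N)) || QP t.

Lemma all_RN t : t \in trees n -> RN NF t.
Proof.
case bt: (brOnly t) => tT.
  have : (0 \in leaves t)%N.
    move: tT; rewrite mem_trees => p; rewrite (perm_mem p) mem_iota leq0n add0n /=.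
    by have := leaves_gt0 t; rewrite (perm_size p) size_iota.
  move/(LB bt); apply: RN_mono => s; by rewrite /NF /Qm => ->.
apply: RN_mono (Prod (negbT bt)) => s; by rewrite /NF => ->; rewrite orbT.
Qed.

End Rules.


Lemma trees_nonleaf n t : (2 <= n)%N -> t \in trees n -> ~~ isLf t.
Proof.
move=> hn; rewrite mem_trees => /perm_size; rewrite size_iota.
by case: t => //= x e; move: hn; rewrite -e.
Qed.

Lemma trees_uniq_leaves n t : t \in trees n -> uniq (leaves t).
Proof. by rewrite mem_trees => /perm_uniq ->; rewrite iota_uniq. Qed.

Lemma trees_words n t : t \in trees n -> leaves t \in words n.
Proof. by rewrite mem_trees mem_words. Qed.

Lemma NF_cases t : ~~ isLf t -> NF t ->
  [/\ isB t, head 0%N (leaves t) == 0%N & exists l r, t = Br l r] \/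
  [/\ isP t & exists l r, t = Pr l r].
Proof.
rewrite /NF /QP; case: t => // l r _ /=.
- rewrite ?andbF ?orbF => /andP [h1 h2]; left; split => //; by exists l, r.
- rewrite andbT => h; right; split => //; by exists l, r.
Qed.

Lemma Br_of t : brOnly t -> ~~ isLf t -> exists l r, t = Br l r.
Proof. by case: t => // l r _ _; exists l, r. Qed.

Section Final.
Variable K : fieldType.
Variable n : nat.
Hypothesis hn : (2 <= n)%N.
Local Notation T := (trees n).
Local Notation W := (words n).
Local Notation R := (ArbRel K n).
Local Notation F := (Fm K n).

Definition NL := [seq t <- T | NF t].
Definition Nmx : 'M[K]_(size NL, size T) := \matrix_(i < size NL) tvec K n (nth (Lf 0) NL i).

Lemma mapc_nil (d : seq (K * tr)) : mapc (plug [::]) d = d.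
Proof. by rewrite /mapc map_id_in // => -[]. Qed.

Lemma tvec_sub t : t \in T -> (tvec K n t <= R + Nmx)%MS.
Proof.
move=> tT; have [d [[d1 d2] d3]] := all_RN K tT.
have := d2 [::] tT; rewrite /= mapc_nil => h.
rewrite -(subrK (fvec n d) (tvec K n t)) addmx_sub_adds //.
rewrite /fvec big_seq; apply: summx_sub => p pd; apply: scalemx_sub.
have pN : p.2 \in NL.
  rewrite mem_filter d3 //= mem_trees; apply: perm_trans (d1 _ pd) _; by rewrite -mem_trees.
have hi : (index p.2 NL < size NL)%N by rewrite index_mem.
by apply: submx_trans (row_sub (Ordinal hi) Nmx); rewrite rowK /= nth_index.
Qed.

Lemma one_sub : ((1%:M : 'M[K]_(size T)) <= R + Nmx)%MS.
Proof.
apply/row_subP => i.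
have -> : row i (1%:M : 'M[K]_(size T)) = tvec K n (nth (Lf 0) T i).
  apply/rowP => j; rewrite !mxE (set_nth_default (Lf 0)) //.
  by rewrite nth_uniq ?uniq_trees // eq_sym.
by apply: tvec_sub; rewrite mem_nth.
Qed.

Lemma NG_eq : Nmx *m F = \matrix_(i < size NL) Gr K n (nth (Lf 0) NL i).
Proof.
apply/row_matrixP => i; rewrite row_mul !rowK tvec_Hm //.
by move: (mem_nth (Lf 0) (ltn_ord i)); rewrite mem_filter => /andP [].
Qed.

Lemma NL_T s : s \in NL -> s \in T.
Proof. by rewrite mem_filter => /andP []. Qed.

Lemma indep (b : 'rV[K]_(size NL)) : b *m (Nmx *m F) = 0 -> b = 0.
Proof.
rewrite NG_eq => hb; apply/rowP => i0; rewrite mxE.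
set s0 := nth (Lf 0) NL i0.
have s0N : s0 \in NL by rewrite mem_nth.
have s0T := NL_T s0N.
have w0W := trees_words s0T.
have hj : (index (leaves s0) W < size W)%N by rewrite index_mem.
set j0 := Ordinal hj.
have ej0 : nth [::] W j0 = leaves s0 by rewrite /= nth_index.
have key : forall J, (forall i : 'I_(size NL), Gr K n (nth (Lf 0) NL i) 0 J = (i == i0)%:R) -> b 0 i0 = 0.
  move=> J hJ; have := congr1 (fun M : 'rV[K]_(size W + size W) => M 0 J) hb; rewrite !mxE.
  under eq_bigr do rewrite mxE hJ.
  rewrite (bigD1 i0) //= eqxx mulr1 big1 ?addr0 // => i /negbTE ->; by rewrite mulr0.
have nth_eq : forall i : 'I_(size NL), (nth (Lf 0) NL i == s0) = (i == i0).
  move=> i; rewrite nth_uniq ?filter_uniq ?uniq_trees //.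
have hcase : forall s, s \in NL ->
  [/\ isB s, head 0%N (leaves s) == 0%N & exists l r, s = Br l r] \/
  [/\ isP s & exists l r, s = Pr l r].
  move=> s sN; apply: NF_cases; first exact: trees_nonleaf hn (NL_T sN).
  by move: sN; rewrite mem_filter => /andP [].
have [[bs0 hs0 [l0 [r0 e0]]]|[ps0 [l0 [r0 e0]]]] := hcase _ s0N.
- apply: (key (lshift _ j0)) => i; rewrite /Gr row_mxEl /Lrow mxE ej0 -nth_eq.
  set s := nth (Lf 0) NL i; have sN : s \in NL by rewrite mem_nth.
  have [[bs hs [l [r e]]]|[ps [l [r e]]]] := hcase _ sN.
    have hne : leaves s0 != [::] by case: (leaves s0) (leaves_gt0 s0).
    have hhd : head 0%N (leaves s0) = head 0%N (leaves s) by rewrite (eqP hs) (eqP hs0).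
    rewrite (Lt_isB K bs (trees_uniq_leaves (NL_T sN)) hne hhd).
    suff -> : (leaves s0 == leaves s) = (s == s0) by [].
    by apply/eqP/eqP => [e'|->]; [rewrite (isB_inj bs0 bs e')|].
  by rewrite e e0.
- apply: (key (rshift _ j0)) => i; rewrite /Gr row_mxEr /Prow mxE ej0 -nth_eq.
  set s := nth (Lf 0) NL i; have sN : s \in NL by rewrite mem_nth.
  have [[bs hs [l [r e]]]|[ps [l [r e]]]] := hcase _ sN.
    by rewrite e e0.
  rewrite Pt_isP //; suff -> : (leaves s0 == leaves s) = (s == s0) by [].
  by apply/eqP/eqP => [e'|->]; [rewrite (isP_inj ps0 ps e')|].
Qed.

Lemma ker_sub : (kermx F <= R)%MS.
Proof.
apply/row_subP => i; set v := row i (kermx F).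
have hv : v *m F = 0 by rewrite -row_mul mulmx_ker row0.
have : (v <= R + Nmx)%MS by apply: submx_trans one_sub; apply: submx1.
case/sub_addsmxP => [[a b]] /= ev.
have hb : b *m (Nmx *m F) = 0.
  by have := hv; rewrite ev mulmxDl -!mulmxA Rels_zero mulmx0 add0r.
by rewrite ev (indep hb) mul0mx addr0 submxMl.
Qed.

Lemma Lrow_expand t : brOnly t -> Lrow K n t = wfvec n (expand K t).
Proof.
move=> bt; apply/rowP => j; rewrite /Lrow /wfvec mxE summxE (Lt_expand K _ bt).
apply: eq_bigr => p _; rewrite !mxE; by rewrite (set_nth_default [::] p.2).
Qed.

Lemma Lrow0 t : ~~ brOnly t -> Lrow K n t = 0.
Proof. by move=> h; apply/rowP => j; rewrite !mxE Lt_nonbr. Qed.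

Lemma Gr_sub t : t \in T -> (Gr K n t <= LieAssMx K n)%MS.
Proof.
move=> tT.
have ha : (Lrow K n t <= LieMx K n)%MS.
  case bt: (brOnly t); last by rewrite Lrow0 ?bt ?sub0mx.
  have tL : t \in LieGen n by rewrite mem_filter bt tT.
  have hi : (index t (LieGen n) < size (LieGen n))%N by rewrite index_mem.
  apply: submx_trans (row_sub (Ordinal hi) _); rewrite rowK /= nth_index //.
  by rewrite Lrow_expand.
have [x ex] := submxP ha.
rewrite /Gr ex /LieAssMx.
have -> : row_mx (x *m LieMx K n) (Prow K n t) =
   row_mx x (Prow K n t) *m block_mx (LieMx K n) 0 0 1%:M.
  by rewrite mul_row_block !mulmx0 addr0 add0r mulmx1.
exact: submxMl.
Qed.

Lemma F_sub : (F <= LieAssMx K n)%MS.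
Proof. apply/row_subP => i; rewrite row_Hm; apply: Gr_sub; by rewrite mem_nth. Qed.

Lemma Gr_in t : t \in T -> (Gr K n t <= F)%MS.
Proof.
move=> tT; have hi : (index t T < size T)%N by rewrite index_mem.
by apply: submx_trans (row_sub (Ordinal hi) _); rewrite row_Hm /= nth_index.
Qed.

Definition pcg (t : tr) (y : nat) := Pr t (Lf y).
Definition pc (w : seq nat) := foldl pcg (Lf (head 0%N w)) (behead w).

Lemma leaves_foldl t0 s : leaves (foldl pcg t0 s) = leaves t0 ++ s.
Proof. by elim: s t0 => [|y s IH] t0 /=; rewrite ?cats0 // IH /= -catA. Qed.

Lemma isP_foldl t0 s : isP t0 -> isP (foldl pcg t0 s).
Proof. by elim: s t0 => [|y s IH] t0 //= h; apply: IH; rewrite /= h. Qed.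

Lemma Pr_foldl t0 s : s != [::] -> exists l r, foldl pcg t0 s = Pr l r.
Proof. by case/lastP: s => // s y _; rewrite foldl_rcons; exists (foldl pcg t0 s), (Lf y). Qed.

Lemma W_sub : (LieAssMx K n <= F)%MS.
Proof.
rewrite /LieAssMx block_mxEv col_mx_sub; apply/andP; split; apply/row_subP => i;
  rewrite row_row_mx row0.
- set s := nth (Lf 0) (LieGen n) i.
  have : s \in LieGen n by rewrite mem_nth.
  rewrite mem_filter => /andP [bs sT].
  have -> : row i (LieMx K n) = Lrow K n s by rewrite rowK Lrow_expand.
  have -> : (0 : 'rV[K]_(size W)) = Prow K n s.
    have [l [r es]] := Br_of bs (trees_nonleaf hn sT).
    by apply/rowP => j; rewrite !mxE es.
  exact: Gr_in.
- set w := nth [::] W i.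
  have wW : w \in W by rewrite mem_nth.
  have sw : (2 <= size w)%N by move: wW; rewrite mem_words => /perm_size ->; rewrite size_iota.
  have lw : leaves (pc w) = w.
    by rewrite /pc leaves_foldl; case: (w) sw => // a v _.
  have pT : pc w \in T by rewrite mem_trees lw -mem_words.
  have [l [r epc]] : exists l r, pc w = Pr l r.
    by apply: Pr_foldl; case: (w) sw => // a [].
  have -> : (0 : 'rV[K]_(size W)) = Lrow K n (pc w).
    by apply/rowP => j; rewrite !mxE epc.
  have -> : row i (1%:M : 'M[K]_(size W)) = Prow K n (pc w).
    apply/rowP => j; rewrite !mxE Pt_isP ?lw; last by apply: isP_foldl.
    by rewrite nth_uniq ?uniq_words // eq_sym.
  exact: Gr_in.
Qed.

Theorem main_n : quot_iso (ArbRel K n) (@treeAct K n) (LieAssMx K n) (@LieAssAct K n).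
Proof.
exists F; split.
- apply/andP; split; first exact: ker_sub.
  by apply/sub_kermxP; apply: Rels_zero.
- by apply/andP; split; [exact: F_sub | exact: W_sub].
- move=> s; exact: Fm_equiv.
Qed.

End Final.


Lemma t1 : trees 1 = [:: Lf 0]. Proof. by vm_compute. Qed.
Lemma w1 : words 1 = [:: [:: 0%N]]. Proof. by vm_compute. Qed.
Lemma r1 (K : fieldType) : Rels K 1 = [::]. Proof. by rewrite /Rels t1. Qed.

Section One.
Variable K : fieldType.
Local Notation F1 := (@Hm K 1 _ (Prow K 1)).

Lemma F1_rank : \rank F1 = 1%N.
Proof.
have h1 : (0 < size (trees 1))%N by rewrite t1.
have h2 : (0 < size (words 1))%N by rewrite w1.
have nz : F1 (Ordinal h1) (Ordinal h2) = 1.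
  rewrite !mxE (_ : nth (Lf 0) (trees 1) 0 = Lf 0) ?t1 //.
have : \rank F1 != 0%N.
  rewrite mxrank_eq0; apply/eqP => e; move: nz; rewrite e mxE => /eqP.
  by rewrite eq_sym oner_eq0.
have := rank_leq_row F1; move: (\rank F1) => r; rewrite t1; case: r => [|[|]] //.
Qed.

Theorem main_one : quot_iso (ArbRel K 1) (@treeAct K 1)
           (1%:M : 'M[K]_(size (words 1))) (@wordAct K 1).
Proof.
exists F1; split.
- apply/andP; split.
    have : row_free F1 by rewrite /row_free F1_rank t1.
    by rewrite -kermx_eq0 => /eqP ->; rewrite sub0mx.
  apply/sub_kermxP; apply/row_matrixP => i; exfalso.
  by case: i => m; rewrite r1.
- apply/andP; split; first exact: submx1.
  by rewrite sub1mx /row_full F1_rank w1.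
- move=> s; apply: Hm_equiv => t _; exact: Prow_act.
Qed.
End One.

Unset Implicit Arguments.
Theorem mainTheorem20 (K : fieldType) (charK0 : [pchar K] =i pred0) :
  quot_iso (ArbRel K 1) (@treeAct K 1)
           (1%:M : 'M[K]_(size (words 1))) (@wordAct K 1)
  /\ forall n : nat, (2 <= n)%N ->
     quot_iso (ArbRel K n) (@treeAct K n) (LieAssMx K n) (@LieAssAct K n).
Proof.
split; first exact: main_one.
move=> n hn; exact: main_n.
Qed.
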